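(* Let $W\in\mathbb{R}^{n\times n}$ be positive definite (i.e. $x^TWx>0$ for all nonzero $x$; $W$ need not be symmetric), with symmetric part $H=\frac12(W+W^T)$ and skew-symmetric part $S=\frac12(W-W^T)$. Write $S=L_s+U_s$ where $L_s$ is the (strictly) lower triangular part and $U_s=-L_s^T$ the upper triangular part of $S$, and assume $L_s\neq 0$. Let $B\in\mathbb{R}^{m\times n}$ with $\operatorname{rank}(B)<m\le n$, let $$A=\begin{pmatrix} W & B^T\\ -B & 0\end{pmatrix},$$ and let $b\in\mathbb{R}^{n+m}$ lie in the range of $A$. For $\omega>0$ let $P=\frac1\omega(I+\omega L_s)(I+\omega U_s)$ and $$M=\begin{pmatrix} P & B^T\\ -B & 0\end{pmatrix}.$$ If $$0<\omega<\frac{-\lambda_{\max}(H)+\sqrt{\lambda_{\max}(H)^2+16\|L_s\|_2^2}}{4\|L_s\|_2^2},$$ then the iteration $x^{(k+1)}=x^{(k)}+M^\dagger(b-Ax^{(k)})$, $k=0,1,2,\dots$, is convergent.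
   Context: $M^\dagger$ is the Moore–Penrose inverse of $M$; $\lambda_{\max}(H)$ is the largest eigenvalue of $H$; $\|\cdot\|_2$ is the spectral norm. The iteration is called convergent if the sequence $x^{(k)}$ converges (to a solution of $Ax=b$) for every initial guess $x^{(0)}$; equivalently, with $T=I-M^\dagger A$, the limit $\lim_{k\to\infty}T^k$ exists. *)

(* Defs.v *)
From HB Require Import structures.
From mathcomp Require Import all_boot all_order all_algebra.
From mathcomp Require Import boolp classical_sets reals topology normedtype sequences.
Set Implicit Arguments. Unset Strict Implicit. Unset Printing Implicit Defensive.
Import Order.TTheory GRing.Theory Num.Theory numFieldNormedType.Exports.
Local Open Scope ring_scope.
Local Open Scope classical_set_scope.

Section Defs.
Variable R : realType.

Definition is_MP_inverse (p q : nat) (M : 'M[R]_(p, q)) (X : 'M[R]_(q, p)) : Prop :=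
  [/\ M *m X *m M = M, X *m M *m X = X,
      (M *m X)^T = M *m X & (X *m M)^T = X *m M].

(* The Moore-Penrose inverse M^dagger (it exists and is unique). *)
Definition mp_pinv (p q : nat) (M : 'M[R]_(p, q)) : 'M[R]_(q, p) :=
  xget 0 [set X | is_MP_inverse M X].

Definition lambda_max (n : nat) (H : 'M[R]_n) : R :=
  sup [set a : R | eigenvalue H a].

Definition eucl_norm (n : nat) (v : 'cV[R]_n) : R :=
  Num.sqrt (\sum_i v i 0 ^+ 2).

Definition spec_norm (p q : nat) (A : 'M[R]_(p, q)) : R :=
  sup [set eucl_norm (A *m x) | x in [set x : 'cV[R]_q | eucl_norm x = 1]].

Definition posdef (n : nat) (W : 'M[R]_n) : Prop :=
  forall x : 'cV[R]_n, x != 0 -> 0 < (x^T *m W *m x) 0 0.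

Definition strict_lower (n : nat) (S : 'M[R]_n) : 'M[R]_n :=
  \matrix_(i, j) (if (j < i)%N then S i j else 0).

Definition iterate_seq (p : nat) (Mp A : 'M[R]_p) (b x0 : 'cV[R]_p) (k : nat)
  : 'cV[R]_p := iter k (fun x => x + Mp *m (b - A *m x)) x0.

Definition iteration_convergent (p : nat) (Mp A : 'M[R]_p) (b : 'cV[R]_p) : Prop :=
  forall x0 : 'cV[R]_p, exists xs : 'cV[R]_p,
    A *m xs = b /\
    forall i j, (fun k => iterate_seq Mp A b x0 k i j) @ \oo --> xs i j.

End Defs.

(* Main.v *)
Require Import Defs.
From HB Require Import structures.
From mathcomp Require Import all_boot all_order all_algebra.
From mathcomp Require Import boolp classical_sets reals topology normedtype sequences.
From mathcomp Require Import ring lra.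
Import Order.TTheory GRing.Theory Num.Theory numFieldNormedType.Exports.
Set Implicit Arguments. Unset Strict Implicit. Unset Printing Implicit Defensive.
Local Open Scope ring_scope.


Section QF.
Variable R : realType.

Definition qf k (G : 'M[R]_k) (a b : 'cV[R]_k) : R := (a^T *m G *m b) 0 0.
Definition nsq k (a : 'cV[R]_k) : R := \sum_i a i 0 ^+ 2.

Lemma qfDl k (G : 'M[R]_k) a1 a2 b : qf G (a1 + a2) b = qf G a1 b + qf G a2 b.
Proof. by rewrite /qf linearD /= !mulmxDl mxE. Qed.
Lemma qfDr k (G : 'M[R]_k) a b1 b2 : qf G a (b1 + b2) = qf G a b1 + qf G a b2.
Proof. by rewrite /qf !mulmxDr mxE. Qed.
Lemma qfZl k (G : 'M[R]_k) t a b : qf G (t *: a) b = t * qf G a b.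
Proof. by rewrite /qf linearZ /= -!scalemxAl mxE. Qed.
Lemma qfZr k (G : 'M[R]_k) t a b : qf G a (t *: b) = t * qf G a b.
Proof. by rewrite /qf -!scalemxAr mxE. Qed.
Lemma qfNl k (G : 'M[R]_k) a b : qf G (- a) b = - qf G a b.
Proof. by rewrite -scaleN1r qfZl mulN1r. Qed.
Lemma qfNr k (G : 'M[R]_k) a b : qf G a (- b) = - qf G a b.
Proof. by rewrite -scaleN1r qfZr mulN1r. Qed.
Lemma qfBl k (G : 'M[R]_k) a1 a2 b : qf G (a1 - a2) b = qf G a1 b - qf G a2 b.
Proof. by rewrite qfDl qfNl. Qed.
Lemma qfBr k (G : 'M[R]_k) a b1 b2 : qf G a (b1 - b2) = qf G a b1 - qf G a b2.
Proof. by rewrite qfDr qfNr. Qed.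
Lemma qfGD k (G1 G2 : 'M[R]_k) a b : qf (G1 + G2) a b = qf G1 a b + qf G2 a b.
Proof. by rewrite /qf mulmxDr mulmxDl mxE. Qed.
Lemma qfGZ k (G : 'M[R]_k) t a b : qf (t *: G) a b = t * qf G a b.
Proof. by rewrite /qf -scalemxAr -scalemxAl mxE. Qed.
Lemma qfGN k (G : 'M[R]_k) a b : qf (- G) a b = - qf G a b.
Proof. by rewrite -scaleN1r qfGZ mulN1r. Qed.
Lemma qfGB k (G1 G2 : 'M[R]_k) a b : qf (G1 - G2) a b = qf G1 a b - qf G2 a b.
Proof. by rewrite qfGD qfGN. Qed.
Lemma qf_tr k (G : 'M[R]_k) a b : qf G a b = qf G^T b a.
Proof.
rewrite /qf; have -> : (a^T *m G *m b) 0 0 = (a^T *m G *m b)^T 0 0 by rewrite [RHS]mxE.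
by rewrite !trmx_mul trmxK mulmxA.
Qed.
Lemma qf_mul k (G : 'M[R]_k) a b : qf G a b = qf 1%:M a (G *m b).
Proof. by rewrite /qf mulmx1 mulmxA. Qed.
Lemma qf1E k (a b : 'cV[R]_k) : qf 1%:M a b = \sum_i a i 0 * b i 0.
Proof. rewrite /qf mulmx1 mxE; apply: eq_bigr => i _; by rewrite mxE. Qed.
Lemma nsqE k (a : 'cV[R]_k) : nsq a = qf 1%:M a a.
Proof. rewrite qf1E; apply: eq_bigr => i _; by rewrite expr2. Qed.
Lemma qf1C k (a b : 'cV[R]_k) : qf 1%:M a b = qf 1%:M b a.
Proof. rewrite !qf1E; apply: eq_bigr => i _; by rewrite mulrC. Qed.
Lemma nsq_ge0 k (a : 'cV[R]_k) : 0 <= nsq a.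
Proof. by apply: sumr_ge0 => i _; rewrite sqr_ge0. Qed.
Lemma nsq_eq0 k (a : 'cV[R]_k) : nsq a = 0 -> a = 0.
Proof.
move=> /eqP; rewrite psumr_eq0 => [/allP H|i _]; last by rewrite sqr_ge0.
apply/matrixP => i j; rewrite ord1 mxE.
by have := H i (mem_index_enum _); rewrite sqrf_eq0 => /eqP.
Qed.
Lemma nsqZ k t (a : 'cV[R]_k) : nsq (t *: a) = t ^+ 2 * nsq a.
Proof. by rewrite !nsqE qfZl qfZr mulrA expr2. Qed.
Lemma nsq0 k : nsq (0 : 'cV[R]_k) = 0.
Proof. by rewrite /nsq big1 // => i _; rewrite mxE expr0n. Qed.
Lemma qf_psd_exp k (G : 'M[R]_k) a b t :
  G^T = G -> qf G (a + t *: b) (a + t *: b) =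
  qf G a a + 2 * t * qf G a b + t ^+ 2 * qf G b b.
Proof.
move=> sG; rewrite !qfDl !qfDr !qfZl !qfZr (qf_tr G b a) sG; ring.
Qed.

Lemma CS k (G : 'M[R]_k) a b : G^T = G -> (forall x, 0 <= qf G x x) ->
  qf G a b ^+ 2 <= qf G a a * qf G b b.
Proof.
move=> sG psd.
have E t := qf_psd_exp a b t sG.
have Hb := psd b; have Ha := psd a.
have [b0|bpos] := eqVneq (qf G b b) 0.
  have [r0|rn0] := eqVneq (qf G a b) 0; first by rewrite r0 b0 expr0n mulr0.
  have := psd (a + (- (qf G a a + 1) / (2 * qf G a b)) *: b).
  rewrite E b0 mulr0 addr0.
  have -> : 2 * (- (qf G a a + 1) / (2 * qf G a b)) * qf G a b = - (qf G a a + 1).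
    by field.
  lra.
have sp : 0 < qf G b b by rewrite lt_def bpos Hb.
have := psd (a + (- qf G a b / qf G b b) *: b).
rewrite E => H.
rewrite -(ler_pM2r sp) in H; move: H.
set r := qf G a b; set s := qf G b b; set p := qf G a a.
have -> : (p + 2 * (- r / s) * r + (- r / s) ^+ 2 * s) * s = p * s - r ^+ 2.
  by field; rewrite /s.
by rewrite mul0r; lra.
Qed.

End QF.


Section MP.
Variable R : realType.

Lemma trmul_eq0 k (w : 'cV[R]_k) : w^T *m w = 0 -> w = 0.
Proof.
move=> h; apply: nsq_eq0; by rewrite nsqE /qf mulmx1 h mxE.
Qed.

Lemma gram_unit (p r : nat) (C : 'M[R]_(p, r)) : row_free C^T -> C^T *m C \in unitmx.
Proof.
move=> fC; rewrite -row_free_unit; apply: inj_row_free => v Hv.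
have : (C *m v^T)^T *m (C *m v^T) = 0.
  by rewrite trmx_mul trmxK mulmxA -(mulmxA v) Hv mul0mx.
move/trmul_eq0 => h.
apply/eqP; rewrite -(mulmx_free_eq0 _ fC); apply/eqP.
by rewrite -(trmxK (v *m C^T)) trmx_mul trmxK h linear0.
Qed.

Lemma MP_fact (p q r : nat) (C : 'M[R]_(p, r)) (F : 'M[R]_(r, q)) :
  row_free C^T -> row_free F -> exists X, is_MP_inverse (C *m F) X.
Proof.
move=> fC fF.
have uC := gram_unit fC.
have uF : F *m F^T \in unitmx by have := gram_unit (C := F^T); rewrite trmxK; apply.
have sG1 : (invmx (C^T *m C))^T = invmx (C^T *m C) by rewrite trmx_inv trmx_mul trmxK.
have sG2 : (invmx (F *m F^T))^T = invmx (F *m F^T) by rewrite trmx_inv trmx_mul trmxK.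
move: (invmx (C^T *m C)) (invmx (F *m F^T)) (mulVmx uC) (mulmxV uF) sG1 sG2
  => G1 G2 e2 e1 sG1 sG2.
exists (F^T *m G2 *m G1 *m C^T).
have MX : C *m F *m (F^T *m G2 *m G1 *m C^T) = C *m G1 *m C^T.
  by rewrite -!mulmxA (mulmxA F) (mulmxA (F *m F^T)) e1 mul1mx.
have XM : F^T *m G2 *m G1 *m C^T *m (C *m F) = F^T *m G2 *m F.
  by rewrite !mulmxA -(mulmxA _ C^T) -(mulmxA _ G1) e2 mulmx1.
split.
- by rewrite MX -!mulmxA (mulmxA C^T) (mulmxA G1) e2 mul1mx.
- by rewrite XM -!mulmxA (mulmxA F) (mulmxA (F *m F^T)) e1 mul1mx.
- by rewrite MX !trmx_mul trmxK sG1 mulmxA.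
- by rewrite XM !trmx_mul trmxK sG2 mulmxA.
Qed.

Lemma exists_MP (p q : nat) (M : 'M[R]_(p, q)) : exists X, is_MP_inverse M X.
Proof.
rewrite -(mulmx_base M); apply: MP_fact; last exact: row_base_free.
by rewrite /row_free mxrank_tr; have := col_base_full M; rewrite /row_full.
Qed.

Lemma mp_pinvP (p q : nat) (M : 'M[R]_(p, q)) : is_MP_inverse M (mp_pinv M).
Proof. by rewrite /mp_pinv; apply: (xgetPex 0 (exists_MP M)). Qed.

End MP.


Section Spec.
Variable R : realType.

Lemma CS1 k (a b : 'cV[R]_k) : qf 1%:M a b ^+ 2 <= nsq a * nsq b.
Proof.
rewrite !nsqE; apply: CS; first by rewrite trmx1.
by move=> x; rewrite -nsqE nsq_ge0.
Qed.

Lemma AMGM1 k (a b : 'cV[R]_k) : 2 * qf 1%:M a b <= nsq a + nsq b.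
Proof.
have := nsq_ge0 (a - b); rewrite !nsqE qfBl !qfBr (qf1C b a); lra.
Qed.

Definition frob p q (A : 'M[R]_(p, q)) : R := \sum_i nsq (row i A)^T.

Lemma frob_ge0 p q (A : 'M[R]_(p, q)) : 0 <= frob A.
Proof. by apply: sumr_ge0 => i _; apply: nsq_ge0. Qed.

Lemma frob_bound p q (A : 'M[R]_(p, q)) x : nsq (A *m x) <= frob A * nsq x.
Proof.
rewrite /frob /nsq mulr_suml; apply: ler_sum => i _.
have -> : (A *m x) i 0 = qf 1%:M (row i A)^T x.
  rewrite qf1E mxE; apply: eq_bigr => j _; by rewrite !mxE.
exact: CS1.
Qed.

Lemma unif_pos k (G : 'M[R]_k) : G^T = G -> (forall x, 0 <= qf G x x) ->
  G \in unitmx -> exists2 c, 0 < c & forall x, c * nsq x <= qf G x x.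
Proof.
move=> sG psd uG.
set K := frob (invmx G).
exists (2 / (K + 1)); first by have := frob_ge0 (invmx G); rewrite -/K => ?; 
  apply: divr_gt0 => //; lra.
move=> x; set y := invmx G *m x.
have e1 : nsq x = qf G x y by rewrite nsqE /qf /y mulmxA -(mulmxA _ G) mulmxV // mulmx1 mulmx1.
have e2 : qf G y y = qf 1%:M y x by rewrite /qf /y mulmx1 -(mulmxA _ G) (mulmxA G) mulmxV // mul1mx.
have hCS := CS x y sG psd.
have hy : nsq y <= K * nsq x by apply: frob_bound.
have hAM := AMGM1 y x.
have Kge := frob_ge0 (invmx G); rewrite -/K in Kge.
have hx := psd x; have hn := nsq_ge0 x.
have h2 : qf G y y <= (K + 1) / 2 * nsq x by rewrite e2; lra.
rewrite -e1 in hCS.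
have h3 : nsq x ^+ 2 <= qf G x x * ((K + 1) / 2 * nsq x).
  by apply: (le_trans hCS); apply: ler_wpM2l.
have [x0|xpos] := eqVneq (nsq x) 0; first by rewrite x0 mulr0.
have xp : 0 < nsq x by rewrite lt_def xpos hn.
have h4 : nsq x <= (K + 1) / 2 * qf G x x.
  rewrite -(ler_pM2l xp) -expr2; apply: (le_trans h3); rewrite mulrCA mulrC; lra.
rewrite mulrC -ler_pdivlMr ?divr_gt0 //; last lra.
by rewrite invf_div mulrC.
Qed.


Lemma qf0l k (G : 'M[R]_k) b : qf G 0 b = 0.
Proof. by rewrite -(scale0r (0 : 'cV[R]_k)) qfZl mul0r. Qed.

Lemma scale_bound k (f : 'cV[R]_k -> R) c :
  (forall t x, f (t *: x) = t ^+ 2 * f x) ->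
  (forall x, nsq x = 1 -> f x <= c) -> forall x, f x <= c * nsq x.
Proof.
move=> hf hb x.
have [x0|xn0] := eqVneq (nsq x) 0.
  rewrite (nsq_eq0 x0) nsq0 mulr0 -(scale0r (0 : 'cV[R]_k)) hf.
  by rewrite expr0n mul0r.
have xp : 0 < nsq x by rewrite lt_def xn0 nsq_ge0.
set t := Num.sqrt (nsq x).
have tp : 0 < t by rewrite sqrtr_gt0.
have t2 : t ^+ 2 = nsq x by rewrite sqr_sqrtr // ltW.
have := hb (t^-1 *: x); rewrite hf nsqZ exprVn t2 mulVf // => /(_ erefl).
rewrite -t2 => h.
have -> : f x = t ^+ 2 * (t ^- 2 * f x).
  by rewrite mulrA mulfV ?mul1r // expf_neq0 // gt_eqF.
by rewrite mulrC ler_wpM2r // ltW // exprn_gt0.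
Qed.

Lemma nsq_pos k (x : 'cV[R]_k) : x != 0 -> 0 < nsq x.
Proof.
move=> xn0; rewrite lt_def nsq_ge0 andbT; apply/eqP => /nsq_eq0 h.
by rewrite h eqxx in xn0.
Qed.

Lemma lambda_bound k (H : 'M[R]_k) : H^T = H ->
  forall x, qf H x x <= lambda_max H * nsq x.
Proof.
case: k H => [|k] H sH x.
  by rewrite [x]flatmx0 nsq0 qf0l mulr0.
pose E0 := [set r : R | exists x, nsq x = 1 /\ qf H x x = r]%classic.
have ub0 : forall x, nsq x = 1 -> qf H x x <= (1 + frob H) / 2.
  move=> y hy; rewrite qf_mul.
  have := AMGM1 y (H *m y); have := frob_bound H y; rewrite hy; lra.
have hsup : has_sup E0.
  split.
    pose y := const_mx 1 : 'cV[R]_k.+1.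
    have yn : 0 < nsq y.
      rewrite /nsq; under eq_bigr do rewrite mxE expr1n.
      by rewrite sumr_const card_ord ltr0n.
    set t := Num.sqrt (nsq y).
    have tp : 0 < t by rewrite sqrtr_gt0.
    exists (qf H (t^-1 *: y) (t^-1 *: y)); exists (t^-1 *: y); split => //.
    by rewrite nsqZ exprVn sqr_sqrtr ?mulVf ?gt_eqF // ltW.
  exists ((1 + frob H) / 2) => r [y [hy <-]]; exact: ub0.
set mu := sup E0.
have hmu : forall y, qf H y y <= mu * nsq y.
  apply: scale_bound => [t y|y hy]; first by rewrite qfZl qfZr mulrA expr2.
  by apply: sup_upper_bound => //; exists y.
set G := mu%:M - H.
have qG y : qf G y y = mu * nsq y - qf H y y.
  by rewrite qfGB -scalemx1 qfGZ nsqE.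
have sG : G^T = G by rewrite /G linearB /= tr_scalar_mx sH.
have nuG : G \notin unitmx.
  apply/negP => uG.
  have psdG : forall y, 0 <= qf G y y by move=> y; rewrite qG subr_ge0 hmu.
  have [c cp hc] := unif_pos sG psdG uG.
  have : mu <= mu - c.
    apply: ge_sup; first by case: hsup.
    move=> r [y [hy <-]]; have := hc y; rewrite qG hy; lra.
  lra.
have [v [hv vn0]] : exists v : 'rV[R]_k.+1, v *m G = 0 /\ v != 0.
  apply: contrapT => hn; move: nuG; rewrite -row_free_unit.
  move/negP; apply; apply: inj_row_free => v hv.
  by apply/eqP; apply/negPn/negP => vn0; apply: hn; exists v.
have eig : eigenvalue H mu.
  apply/eigenvalueP; exists v => //.
  by move: hv; rewrite /G mulmxBr mul_mx_scalar => /eqP; rewrite subr_eq0 => /eqP <-.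
have hE1 : has_sup [set a : R | eigenvalue H a]%classic.
  split; first by exists mu.
  exists mu => a /eigenvalueP [w hw wn0].
  have wtn0 : w^T != 0 by apply: contraNneq wn0 => /eqP; rewrite trmx_eq0.
  have e : qf H w^T w^T = a * nsq w^T.
    by rewrite nsqE /qf trmxK mulmx1 hw -scalemxAl [LHS]mxE.
  have := hmu w^T; rewrite e.
  by rewrite ler_pM2r // nsq_pos.
have : mu <= lambda_max H by apply: sup_upper_bound => //.
move=> hl; apply: (le_trans (hmu x)); apply: ler_wpM2r => //; exact: nsq_ge0.
Qed.


Lemma spec_bound p q (L : 'M[R]_(p, q)) y :
  nsq (L *m y) <= spec_norm L ^+ 2 * nsq y.
Proof.
apply: (scale_bound (f := fun y => nsq (L *m y))) => [t z|z hz].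
  by rewrite -scalemxAr nsqZ.
have ez : eucl_norm z = 1 by rewrite /eucl_norm -/(nsq z) hz sqrtr1.
have hs : has_sup [set eucl_norm (L *m x) | x in [set x | eucl_norm x = 1]]%classic.
  split; first by exists (eucl_norm (L *m z)); exists z.
  exists (Num.sqrt (frob L)) => r [x hx <-].
  rewrite /eucl_norm -/(nsq (L *m x)) ler_sqrt ?frob_ge0 //.
  have := frob_bound L x.
  have -> : nsq x = 1.
    by move: hx; rewrite /eucl_norm -/(nsq x) => hx; rewrite -(sqr_sqrtr (nsq_ge0 x)) hx expr1n.
  by rewrite mulr1.
have : eucl_norm (L *m z) <= spec_norm L.
  by apply: sup_upper_bound => //; exists z.
rewrite /eucl_norm -/(nsq (L *m z)) => h.
have h0 := sqrtr_ge0 (nsq (L *m z)).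
rewrite -(sqr_sqrtr (nsq_ge0 (L *m z))).
by rewrite ler_pXn2r ?nnegrE //; apply: le_trans h.
Qed.

End Spec.

Local Open Scope classical_set_scope.
Local Open Scope ring_scope.


Section Cvg.
Variable R : realType.

Lemma cvg_sum0 n (F : 'I_n -> nat -> R) :
  (forall i, F i @ \oo --> (0 : R)) -> (fun k => \sum_i F i k) @ \oo --> (0 : R).
Proof.
elim: n F => [|n IH] F hF.
  under eq_fun do rewrite big_ord0; exact: cvg_cst.
under eq_fun do rewrite big_ord_recr /=.
have h1 := IH (fun i => F (widen_ord (leqnSn n) i)) (fun i => hF _).
have h2 := hF ord_max.
suff : (fun k => \sum_(i < n) F (widen_ord (leqnSn n) i) k + F ord_max k) @ \oo --> (0 + 0 : R).
  by rewrite addr0.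
exact: cvgD.
Qed.

Lemma cvg_mulmx0 p q (A : 'M[R]_(p, q)) (f : nat -> 'cV[R]_q) :
  (forall j, (fun k => f k j 0) @ \oo --> (0 : R)) ->
  forall i, (fun k => (A *m f k) i 0) @ \oo --> (0 : R).
Proof.
move=> hf i; under eq_fun do rewrite mxE.
apply: cvg_sum0 => j; rewrite -(mulr0 (A i j)); exact: cvgMr.
Qed.

Lemma cvg_geom_vec q (f : nat -> 'cV[R]_q) C r :
  0 <= C -> 0 <= r < 1 -> (forall k, nsq (f k) <= C * r ^+ k) ->
  forall i, (fun k => f k i 0) @ \oo --> (0 : R).
Proof.
move=> C0 /andP[r0 r1] hf i.
set s := Num.sqrt C; set t := Num.sqrt r.
have s0 : 0 <= s := sqrtr_ge0 _.
have t0 : 0 <= t := sqrtr_ge0 _.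
have t1 : t < 1 by rewrite /t -sqrtr1 ltr_sqrt // ltr01.
have bd k : `|f k i 0| <= s * t ^+ k.
  have h1 : f k i 0 ^+ 2 <= nsq (f k).
    rewrite /nsq (bigD1 i) //= lerDl; apply: sumr_ge0 => j _; exact: sqr_ge0.
  have h2 : C * r ^+ k = (s * t ^+ k) ^+ 2.
    by rewrite exprMn -exprM mulnC exprM !sqr_sqrtr.
  rewrite -(ler_pXn2r (n := 2)) ?nnegrE ?mulr_ge0 ?exprn_ge0 //.
  by rewrite -h2 real_normK ?num_real //; apply: le_trans (hf k).
have g0 : (fun k => s * t ^+ k) @ \oo --> (0 : R).
  rewrite -(mulr0 s); apply: cvgMr; apply: cvg_expr; rewrite ger0_norm //.
have hl : (fun k => - (s * t ^+ k)) @ \oo --> (0 : R).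
  by rewrite -oppr0; apply: cvgN.
apply: (squeeze_cvgr _ hl g0).
by apply: nearW => k; rewrite -ler_norml bd.
Qed.

End Cvg.

Lemma shift_back (R : realType) (f : nat -> R) (l : R) :
  (fun k => f k.+1) @ \oo --> l -> f @ \oo --> l.
Proof. by rewrite -(cvg_shiftS f). Qed.


Section Alg.
Variable R : realType.

Lemma S_decomp n (W : 'M[R]_n) (S : 'M[R]_n) : S = 2^-1 *: (W - W^T) ->
  S = strict_lower S - (strict_lower S)^T.
Proof.
move=> ->; apply/matrixP => i j; rewrite !mxE.
case: (ltngtP i j) => hij /=.
- by rewrite sub0r -mulrN opprB.
- by rewrite subr0.
- have -> : i = j by apply: val_inj.
  by rewrite subrr mulr0 subr0.
Qed.

Lemma P_decomp n (L : 'M[R]_n) w : w != 0 ->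
  w^-1 *: ((1%:M + w *: L) *m (1%:M + w *: (- L^T))) =
  w^-1 *: 1%:M - w *: (L *m L^T) + (L - L^T).
Proof.
move=> w0.
rewrite mulmxDl !mulmxDr !mul1mx !mulmx1 -!scalemxAl -!scalemxAr scalerA.
rewrite mulmxN !scalerDr !scalerA mulVf // !scale1r -expr2.
have -> : w^-1 * w ^+ 2 = w by rewrite expr2 mulrA mulVf // mul1r.
rewrite scalerN.
set a := w^-1 *: 1%:M; set b := w *: (L *m L^T).
by rewrite addrACA [RHS]addrACA (addrC (- L^T)).
Qed.

End Alg.


Theorem theorem3 (R : realType) (n m : nat) (W : 'M[R]_n) (B : 'M[R]_(m, n))
  (b : 'cV[R]_(n + m)) (omega : R) :
  posdef W ->
  let H := 2^-1 *: (W + W^T) in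
  let S := 2^-1 *: (W - W^T) in
  let Ls := strict_lower S in
  let Us := - Ls^T in
  Ls != 0 ->
  (\rank B < m)%N -> (m <= n)%N ->
  let A : 'M[R]_(n + m) := block_mx W B^T (- B) 0 in
  (exists y : 'cV[R]_(n + m), b = A *m y) ->
  0 < omega ->
  let P := omega^-1 *: ((1%:M + omega *: Ls) *m (1%:M + omega *: Us)) in
  let M : 'M[R]_(n + m) := block_mx P B^T (- B) 0 in
  let lam := lambda_max H in
  let l2 := spec_norm Ls in
  omega < (- lam + Num.sqrt (lam ^+ 2 + 16 * l2 ^+ 2)) / (4 * l2 ^+ 2) ->
  iteration_convergent (mp_pinv M) A b.
Proof.
move=> pdW H S L U _ _ _ A [y ->] om0 P M lam l2 hom.
have omn0 : omega != 0 by rewrite gt_eqF.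
set Q := omega^-1 *: 1%:M - omega *: (L *m L^T).
have eS : S = L - L^T by apply: S_decomp.
have eP : P = Q + S by rewrite /P /U P_decomp // -eS.
have eW : W = H + S.
  by apply/matrixP => i j; rewrite !mxE; lra.
have sS : S^T = - S by rewrite /S linearZ /= linearB /= trmxK -scalerN opprB.
have sH : H^T = H by rewrite /H linearZ /= linearD /= trmxK addrC.
have sQ : Q^T = Q.
  by rewrite /Q linearB /= !linearZ /= tr_scalar_mx trmx_mul trmxK.
have qS x : qf S x x = 0.
  have := qf_tr S x x; rewrite sS qfGN => h; lra.
have qP x : qf P x x = qf Q x x by rewrite eP qfGD qS addr0.
have qH x : qf H x x = qf W x x by rewrite [in RHS]eW qfGD qS addr0.
have qQ x : qf Q x x = omega^-1 * nsq x - omega * nsq (L^T *m x).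
  rewrite qfGB !qfGZ -nsqE nsqE; congr (_ - _ * _).
  by rewrite nsqE /qf mulmx1 trmx_mul trmxK !mulmxA.
have hL x : nsq (L^T *m x) <= l2 ^+ 2 * nsq x.
  set z := L^T *m x.
  have e : nsq z = qf 1%:M x (L *m z).
    by rewrite !nsqE /qf !mulmx1 /z trmx_mul trmxK !mulmxA.
  have c := CS1 x (L *m z); rewrite -e in c.
  have sb := spec_bound L z.
  have nz := nsq_ge0 z; have nx := nsq_ge0 x.
  have [z0|zn0] := eqVneq (nsq z) 0.
    by rewrite z0 mulr_ge0 // sqr_ge0.
  have zp : 0 < nsq z by rewrite lt_def zn0 nz.
  have c2 : nsq z * nsq z <= (nsq x * l2 ^+ 2) * nsq z.
    rewrite -expr2 -mulrA; apply: (le_trans c); apply: ler_wpM2l => //.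
  by rewrite ler_pM2r // mulrC in c2.
have hlam x : qf H x x <= lam * nsq x by apply: lambda_bound.
have psdH x : 0 <= qf H x x.
  rewrite qH; have [->|xn0] := eqVneq x 0; first by rewrite qf0l.
  by apply: ltW; apply: pdW.
have [h hp hh] : exists2 h, 0 < h & forall x, h * nsq x <= qf H x x.
  apply: unif_pos => //; rewrite -row_free_unit; apply: inj_row_free => v hv.
  have : qf W v^T v^T = 0 by rewrite -qH /qf trmxK hv mul0mx mxE.
  apply: contra_eq => vn0; apply/lt0r_neq0/pdW.
  by apply: contraNneq vn0 => /eqP; rewrite trmx_eq0.
have l2p : 0 < l2 ^+ 2.
  rewrite lt_def sqr_ge0 andbT; apply/negP => /eqP l0.
  by move: hom; rewrite l0 !mulr0 invr0 mulr0; lra.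
have key : 2 * l2 ^+ 2 * omega ^+ 2 + lam * omega < 2.
  set s := Num.sqrt (lam ^+ 2 + 16 * l2 ^+ 2).
  have s2 : s ^+ 2 = lam ^+ 2 + 16 * l2 ^+ 2.
    by rewrite sqr_sqrtr // addr_ge0 ?sqr_ge0 // mulr_ge0 // ltW.
  have s0 : 0 <= s := sqrtr_ge0 _.
  have h1 : omega * (4 * l2 ^+ 2) < - lam + s.
    by rewrite -ltr_pdivlMr // mulr_gt0.
  set t := 4 * l2 ^+ 2 * omega + lam.
  case: (leP 0 t) => ht.
    have ts : t < s by rewrite /t; lra.
    have t2 : t ^+ 2 < s ^+ 2 by rewrite ltr_pXn2r ?nnegrE.
    rewrite s2 /t in t2.
    have : 8 * l2 ^+ 2 * (2 * l2 ^+ 2 * omega ^+ 2 + lam * omega) < 8 * l2 ^+ 2 * 2.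
      move: t2; set a := l2 ^+ 2; rewrite !expr2 => t2; nra.
    by rewrite ltr_pM2l // mulr_gt0.
  have : omega * t < 0 by rewrite pmulr_rlt0.
  rewrite /t; set a := l2 ^+ 2; move=> h2.
  have : 0 <= a * omega ^+ 2 by rewrite mulr_ge0 ?sqr_ge0 // ltW.
  rewrite !expr2 in h2 *; nra.
set c2 := 2 * (omega^-1 - omega * l2 ^+ 2) - lam.
have c2p : 0 < c2.
  have e : omega * c2 = 2 - 2 * l2 ^+ 2 * omega ^+ 2 - lam * omega.
    by rewrite /c2; field.
  have : 0 < omega * c2 by rewrite e; lra.
  by rewrite pmulr_rgt0.
have hQup x : qf Q x x <= omega^-1 * nsq x.
  rewrite qQ; have := nsq_ge0 (L^T *m x); have := ltW om0; nra.
have h2Q x : c2 * nsq x <= 2 * qf Q x x - qf H x x.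
  have e : c2 * nsq x = 2 * (omega^-1 * nsq x) - 2 * (omega * (l2 ^+ 2 * nsq x))
     - lam * nsq x by rewrite /c2; ring.
  have h1 : omega * nsq (L^T *m x) <= omega * (l2 ^+ 2 * nsq x).
    by rewrite ler_wpM2l // ltW.
  rewrite e qQ; have := hlam x; lra.
have hQlow x : c2 / 2 * nsq x <= qf Q x x.
  have := h2Q x; have := psdH x; lra.
set eps := Num.min (h * omega) (Num.min (c2 * omega) 1).
have eps1 : eps <= h * omega by rewrite /eps ge_min lexx.
have eps2 : eps <= c2 * omega by rewrite /eps ge_min [X in _ || X]ge_min lexx orbT.
have eps3 : eps <= 1 by rewrite /eps ge_min [X in _ || X]ge_min lexx !orbT.
have eps0 : 0 < eps by rewrite /eps !lt_min ltr01 !mulr_gt0.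
have hepsH x : eps * qf Q x x <= qf H x x.
  have a1 : eps * qf Q x x <= eps * (omega^-1 * nsq x) by rewrite ler_wpM2l // ltW.
  have a2 : eps / omega <= h by rewrite ler_pdivrMr.
  have a3 : eps / omega * nsq x <= h * nsq x by rewrite ler_wpM2r // nsq_ge0.
  rewrite mulrA in a1; have := hh x; lra.
have heps2 x : eps * qf Q x x <= 2 * qf Q x x - qf H x x.
  have a1 : eps * qf Q x x <= eps * (omega^-1 * nsq x) by rewrite ler_wpM2l // ltW.
  have a2 : eps / omega <= c2 by rewrite ler_pdivrMr.
  have a3 : eps / omega * nsq x <= c2 * nsq x by rewrite ler_wpM2r // nsq_ge0.
  rewrite mulrA in a1; have := h2Q x; lra.
set N := Q - H.
have sN : N^T = N by rewrite /N linearB /= sQ sH.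
have pol a0 b0 : 2 * qf N a0 b0 <= (1 - eps) * (qf Q a0 a0 + qf Q b0 b0).
  have e1 := qf_psd_exp a0 b0 1 sN; have e2 := qf_psd_exp a0 b0 (-1) sN.
  have f1 := qf_psd_exp a0 b0 1 sQ; have f2 := qf_psd_exp a0 b0 (-1) sQ.
  have qN z w : qf N z w = qf Q z w - qf H z w by rewrite /N qfGB.
  rewrite !qN in e1 e2 *.
  have g1 := hepsH (a0 + 1 *: b0); have g2 := heps2 (a0 + (-1) *: b0).
  move: e1 e2 f1 f2 g1 g2.
  set z1 := a0 + 1 *: b0; set z2 := a0 + (-1) *: b0.
  move=> e1 e2 f1 f2 g1 g2.
  have e3 : eps * (qf Q a0 a0 + qf Q b0 b0) = (eps * qf Q z1 z1 + eps * qf Q z2 z2) / 2.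
    by rewrite f1 f2; field.
  rewrite mulrBl mul1r e3.
  rewrite !expr2 in e1 e2 f1 f2; lra.
set X := mp_pinv M.
have [MXM XMX sMX sXM] := mp_pinvP M; rewrite -/X in MXM XMX sMX sXM.
have D1 (w : 'cV[R]_(n + m)) : M *m (X *m (A *m w)) = A *m w.
  set z := A *m w; set r := z - M *m (X *m z).
  have eMT : M^T *m (M *m X) = M^T by rewrite -{1}sMX -trmx_mul MXM.
  have hMr : M^T *m r = 0.
    by rewrite /r mulmxBr (mulmxA M) (mulmxA M^T (M *m X)) eMT subrr.
  have hMr0 := hMr.
  rewrite -(vsubmxK r) /M tr_block_mx mul_block_col in hMr.
  have e1 := congr1 usubmx hMr; have e2 := congr1 dsubmx hMr.
  rewrite col_mxKu linear0 in e1; rewrite col_mxKd linear0 in e2.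
  rewrite trmxK linear0 mul0mx addr0 in e2.
  rewrite linearN /= mulNmx in e1.
  have e1' : P^T *m usubmx r = B^T *m dsubmx r by apply/eqP; rewrite -subr_eq0 e1.
  have q0 : qf P (usubmx r) (usubmx r) = 0.
    rewrite qf_tr /qf -mulmxA e1' mulmxA -trmx_mul e2 linear0 mul0mx mxE //.
  have r10 : usubmx r = 0.
    apply: nsq_eq0; apply/eqP; rewrite eq_le nsq_ge0 andbT.
    have := hQlow (usubmx r); rewrite -qP q0.
    by rewrite pmulr_rle0 // divr_gt0.
  have r2B : B^T *m dsubmx r = 0 by rewrite -e1' r10 mulmx0.
  have rr : r^T *m r = 0.
    have e3 : r^T *m r = r^T *m z - (M^T *m r)^T *m (X *m z).
      by rewrite trmx_mul trmxK -(mulmxA r^T M) -mulmxBr.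
    rewrite e3 hMr0 linear0 mul0mx subr0.
    rewrite -(vsubmxK r) r10 tr_col_mx /z /A -(vsubmxK w) mul_block_col mul_row_col.
    rewrite linear0 mul0mx add0r mul0mx addr0 mulNmx mulmxN mulmxA.
    by rewrite -[(dsubmx r)^T *m B]trmxK trmx_mul trmxK r2B linear0 mul0mx oppr0.
  by have := trmul_eq0 rr; rewrite /r => /eqP; rewrite subr_eq0 => /eqP.
set Y := mp_pinv B^T.
have [BYB YBY sBY sYB] := mp_pinvP B^T; rewrite -/Y in BYB YBY sBY sYB.
set K := 1%:M - Y *m B^T.
have BK : B^T *m K = 0 by rewrite /K mulmxBr mulmx1 mulmxA BYB subrr.
have sK : K^T = K by rewrite /K linearB /= trmx1 sYB.
have D2 (f : 'cV[R]_(n + m)) : K *m dsubmx (X *m f) = 0.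
  set Zc := col_mx (0 : 'M[R]_(n, m)) K.
  have MZ : M *m Zc = 0.
    by rewrite /M /Zc mul_block_col !mulmx0 !mul0mx BK !addr0 col_mx0.
  have ZX : Zc^T *m X = 0.
    by rewrite -XMX !mulmxA -(mulmxA _ X M) -sXM trmx_mul mulmxA -trmx_mul MZ linear0 !mul0mx.
  have := congr1 (mulmx^~ f) ZX; rewrite mul0mx -mulmxA /Zc tr_col_mx.
  by rewrite -{1}(vsubmxK (X *m f)) mul_row_col linear0 mul0mx add0r sK.
have ePW : P - W = N by rewrite eP eW opprD addrACA subrr addr0.
move=> x0.
pose x k := iterate_seq X A (A *m y) x0 k.
pose e k := x k - y.
have estep k : e k.+1 = e k - X *m (A *m e k).
  rewrite /e /x /iterate_seq iterS -/(iterate_seq X A (A *m y) x0 k).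
  set xx := iterate_seq _ _ _ _ _.
  rewrite !mulmxBr; set a := X *m (A *m xx); set c := X *m (A *m y).
  by rewrite opprB addrAC.
pose u k := usubmx (e k); pose v k := dsubmx (e k).
have eMe k : M *m e k.+1 = M *m e k - A *m e k by rewrite estep mulmxBr D1.
have E12 k : P *m u k.+1 + B^T *m v k.+1 = N *m u k /\ B *m u k.+1 = 0.
  have := eMe k; rewrite -(vsubmxK (e k.+1)) -(vsubmxK (e k)) /M /A !mul_block_col.
  rewrite -/(u k) -/(v k) -/(u k.+1) -/(v k.+1).
  move=> h1; have h2 := congr1 usubmx h1; have h3 := congr1 dsubmx h1.
  rewrite col_mxKu linearB /= !col_mxKu in h2.
  rewrite col_mxKd linearB /= !col_mxKd in h3.
  split.
    by rewrite h2 -ePW mulmxBl opprD addrACA subrr addr0.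
  by move: h3; rewrite !mul0mx !addr0 subrr mulNmx => /eqP; rewrite oppr_eq0 => /eqP.
pose q k := qf Q (u k) (u k).
have qN k : q k.+1 = qf N (u k.+1) (u k).
  have [h1 h2] := E12 k.
  have ee : (u k.+1)^T *m (P *m u k.+1) + (u k.+1)^T *m (B^T *m v k.+1)
      = (u k.+1)^T *m (N *m u k) by rewrite -mulmxDr h1.
  have z : (u k.+1)^T *m (B^T *m v k.+1) = 0.
    by rewrite mulmxA -trmx_mul h2 linear0 mul0mx.
  rewrite z addr0 in ee.
  by rewrite /q -qP /qf -!mulmxA ee.
set rho := (1 - eps) / (1 + eps).
have rho0 : 0 <= rho by rewrite divr_ge0 //; lra.
have rho1 : rho < 1 by rewrite ltr_pdivrMr; lra.
have q0 k : 0 <= q k.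
  have := hQlow (u k); have := nsq_ge0 (u k); rewrite /q => ? hz.
  by apply: le_trans hz; rewrite mulr_ge0 // divr_ge0 // ltW.
have hq k : q k.+1 <= rho * q k.
  have := pol (u k.+1) (u k); rewrite -qN -/(q k) => hz.
  rewrite /rho mulrC mulrA ler_pdivlMr; last lra.
  rewrite -/(q k.+1) in hz; nra.
have hqk k : q k <= rho ^+ k * q 0.
  elim: k => [|k IH]; first by rewrite expr0 mul1r.
  apply: (le_trans (hq k)); rewrite exprS -mulrA; exact: ler_wpM2l.
have ucv i : (fun k => u k i 0) @ \oo --> (0 : R).
  apply: (@cvg_geom_vec _ _ u (2 / c2 * q 0) rho) => //.
  - by rewrite mulr_ge0 // divr_ge0 // ltW.
  - by rewrite rho0 rho1.
  move=> k; have := hQlow (u k); have := hqk k; rewrite -/(q k) => h1 h2.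
  have nn := nsq_ge0 (u k).
  have a : nsq (u k) <= 2 / c2 * q k.
    rewrite -(ler_pM2l (_ : 0 < c2 / 2)); last by rewrite divr_gt0.
    rewrite mulrA (_ : c2 / 2 * (2 / c2) = 1) ?mul1r //.
    by field; rewrite gt_eqF.
  have b0 : 2 / c2 * q k <= 2 / c2 * (rho ^+ k * q 0).
    by rewrite ler_wpM2l // divr_ge0 // ltW.
  have -> : 2 / c2 * q 0 * rho ^+ k = 2 / c2 * (rho ^+ k * q 0) by ring.
  exact: le_trans a b0.
have Kinv k : K *m v k = K *m v 0.
  elim: k => // k IH; rewrite -IH /v estep linearB /= mulmxBr D2 subr0 //.
have BTv k : B^T *m v k.+1 = N *m u k - P *m u k.+1.
  by have [h1 _] := E12 k; rewrite -h1 (addrC (P *m _)) addrK.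
have vdec k : v k.+1 = Y *m (B^T *m v k.+1) + K *m v 0.
  by rewrite -(Kinv k.+1) mulmxA -mulmxDl /K addrC subrK mul1mx.
have subE p (C D : 'cV[R]_p) i : (C - D) i 0 = C i 0 - D i 0 by rewrite !mxE.
have addE p (C D : 'cV[R]_p) i : (C + D) i 0 = C i 0 + D i 0 by rewrite !mxE.
have ucv' j : (fun k => u k.+1 j 0) @ \oo --> (0 : R).
  by have := ucv j; rewrite -cvg_shiftS.
have BTcv i : (fun k => (B^T *m v k.+1) i 0) @ \oo --> (0 : R).
  under eq_fun do rewrite BTv subE.
  rewrite -(subr0 (0 : R)); apply: cvgB.
    exact: (cvg_mulmx0 N ucv).
  exact: (cvg_mulmx0 P ucv').
have vcv i : (fun k => v k i 0) @ \oo --> (K *m v 0) i 0.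
  suff hs : (fun k => v k.+1 i 0) @ \oo --> (K *m v 0) i 0.
    exact: (shift_back (f := fun k => v k i 0) hs).
  have fe : (fun k => v k.+1 i 0) =
      (fun k => (Y *m (B^T *m v k.+1)) i 0 + (K *m v 0) i 0).
    by apply: funext => k; rewrite {1}vdec addE.
  rewrite fe -[X in _ --> X](add0r ((K *m v 0) i 0)).
  exact: (cvgD (cvg_mulmx0 Y (f := fun k => B^T *m v k.+1) BTcv i) (cvg_cst _)).
exists (y + col_mx 0 (K *m v 0)); split.
  rewrite mulmxDr /A mul_block_col !mulmx0 mul0mx mulmxA BK mul0mx.
  by rewrite !addr0 col_mx0 addr0.
move=> i j; rewrite (ord1 j).
have ex k : iterate_seq X A (A *m y) x0 k = y + col_mx (u k) (v k).
  by rewrite /u /v vsubmxK /e addrC subrK.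
under eq_fun do rewrite ex addE.
rewrite addE; apply: cvgD; first exact: cvg_cst.
rewrite mxE; under eq_fun do rewrite mxE.
case: (split i) => a /=.
  by rewrite mxE; apply: ucv.
exact: vcv.
Qed.
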